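(* Let $b \ge 1$, $d=b+1$, $n=2b$, and let $f,g:\mathbb{F}_2^d\to\mathbb{F}_2$ be bipermutive local rules that are both nonlinear (algebraic degree at least $2$) and such that the no-boundary CA $F,G:\mathbb{F}_2^{2b}\to\mathbb{F}_2^b$ they define form a pair of orthogonal CA. Let $H:\mathbb{F}_2^n\to\mathbb{F}_2^n$ be the superposition S-box of $F$ and $G$. If $v\in\mathbb{F}_2^n\setminus\{\underline 0\}$ satisfies $nl(v\cdot H)=0$, then $supp(v)$ contains at least one index in $\{1,\dots,b\}$ and at least one index in $\{b+1,\dots,n\}$.
   Context: A local rule $f:\mathbb{F}_2^d\to\mathbb{F}_2$ with $d\ge 2$ is bipermutive if $f(x_1,\dots,x_d)=x_1\oplus \varphi(x_2,\dots,x_{d-1})\oplus x_d$ for some $\varphi:\mathbb{F}_2^{d-2}\to\mathbb{F}_2$. For $b=d-1$, the no-boundary CA with local rule $f$ is $F:\mathbb{F}_2^{2b}\to\mathbb{F}_2^b$, $F(x)_i=f(x_i,\dots,x_{i+b})$ for $i=1,\dots,b$. Such an $F$ defines a $2^b\times 2^b$ Latin square whose entry at row $x\in\mathbb{F}_2^b$ and column $y\in\mathbb{F}_2^b$ is $F(x\|y)$ ($\|$ = concatenation). Two such CA $F,G$ (with bipermutive rules $f,g$ of the same diameter) are orthogonal (an OCA pair) if their Latin squares are orthogonal, i.e. the map $(x,y)\mapsto (F(x\|y),G(x\|y))$ is a bijection of $\mathbb{F}_2^b\times\mathbb{F}_2^b$. The superposition S-box is $H(x)=F(x)\|G(x)$,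 i.e. $H(x)_i=f(x_i,\dots,x_{i+b})$ and $H(x)_{b+i}=g(x_i,\dots,x_{i+b})$ for $i=1,\dots,b$. For $v\in\mathbb{F}_2^n\setminus\{\underline 0\}$, $v\cdot H(x)=\bigoplus_i v_iH(x)_i$; $supp(v)=\{i: v_i\ne 0\}$. $nl(h)$ denotes the minimum Hamming distance of the Boolean function $h$ to the affine functions, so $nl(h)=0$ iff $h$ is affine. *)

(* Defs.v *)
(* F_2 is modelled by bool (xor = addb, product = andb). *)
From mathcomp Require Import all_boot.
Set Implicit Arguments. Unset Strict Implicit. Unset Printing Implicit Defensive.

(* Vectors of F_2^n, indexed 0..n-1 (paper index i <-> ordinal i-1). *)
Definition vec (n : nat) := {ffun 'I_n -> bool}.

(* Coordinate k of x (0-based); false when out of range (never used so). *)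
Definition coord (n : nat) (x : vec n) (k : nat) : bool :=
  if (insub k : option 'I_n) is Some i then x i else false.

Definition middle (d : nat) (x : vec d) : vec (d - 2) :=
  [ffun i : 'I_(d - 2) => coord x i.+1].
Definition bipermutive (d : nat) (f : vec d -> bool) : Prop :=
  2 <= d /\ exists phi : vec (d - 2) -> bool,
    forall x : vec d,
      f x = coord x 0 (+) phi (middle x) (+) coord x d.-1.

Definition subvec (n : nat) (x u : vec n) : bool := [forall i, x i ==> u i].
Definition anf_coef (n : nat) (h : vec n -> bool) (u : vec n) : bool :=
  \big[addb/false]_(x : vec n | subvec x u) h x.
Definition hweight (n : nat) (u : vec n) : nat := #|[pred i | u i]|.
Definition alg_degree (n : nat) (h : vec n -> bool) : nat :=
  \max_(u : vec n | anf_coef h u) hweight u.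

Definition dotv (n : nat) (a x : vec n) : bool :=
  \big[addb/false]_(i < n) (a i && x i).

Definition hdist (n : nat) (h k : vec n -> bool) : nat :=
  #|[pred x : vec n | h x != k x]|.
Definition nl (n : nat) (h : vec n -> bool) : nat :=
  \big[minn/2 ^ n]_(a : vec n) \big[minn/2 ^ n]_(c : bool)
     hdist h (fun x => dotv a x (+) c).

Definition nbCA (b : nat) (f : vec b.+1 -> bool) (x : vec (b + b)) : vec b :=
  [ffun i : 'I_b => f [ffun j : 'I_b.+1 => coord x (i + j)]].

Definition concat (b : nat) (x y : vec b) : vec (b + b) :=
  [ffun i : 'I_(b + b) => match split i with inl j => x j | inr j => y j end].

(* Orthogonality of the Latin squares of F and G. *)
Definition orthogonal_CA (b : nat) (f g : vec b.+1 -> bool) : Prop :=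
  bijective (fun p : vec b * vec b =>
    (nbCA f (concat p.1 p.2), nbCA g (concat p.1 p.2))).

Definition sbox (b : nat) (f g : vec b.+1 -> bool) (x : vec (b + b)) : vec (b + b) :=
  concat (nbCA f x) (nbCA g x).

(* Main.v *)
Require Import Defs.
From mathcomp Require Import all_boot.
From mathcomp Require Import zify.
Set Implicit Arguments. Unset Strict Implicit. Unset Printing Implicit Defensive.

Lemma andbX (a b c : bool) : a && (b (+) c) = (a && b) (+) (a && c).
Proof. by case: a. Qed.

Definition flipn d (y : vec d) (t : nat) : vec d := [ffun j => y j (+) (j == t :> nat)].

Definition ddn d (h : vec d -> bool) (s t : nat) (y : vec d) : bool :=
  h y (+) h (flipn y s) (+) h (flipn y t) (+) h (flipn (flipn y s) t).

Lemma flipnE d (y : vec d) t j : flipn y t j = y j (+) (j == t :> nat).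
Proof. by rewrite ffunE. Qed.

Lemma flipn_out d (y : vec d) t : d <= t -> flipn y t = y.
Proof.
move=> Ht; apply/ffunP=> j; rewrite flipnE.
have -> : (nat_of_ord j == t) = false.
  by apply/negbTE; rewrite neq_ltn (leq_trans (ltn_ord j) Ht).
by rewrite addbF.
Qed.

Lemma flipnC d (y : vec d) s t : flipn (flipn y s) t = flipn (flipn y t) s.
Proof. apply/ffunP=> j; rewrite !flipnE -!addbA; congr (_ (+) _); exact: addbC. Qed.

Lemma flipnK d (y : vec d) t : flipn (flipn y t) t = y.
Proof. apply/ffunP=> j; by rewrite !flipnE -addbA addbb addbF. Qed.

Lemma ddnC d h s t (y : vec d) : ddn h s t y = ddn h t s y.
Proof.
rewrite /ddn flipnC; congr (_ (+) _); rewrite -!addbA; congr (_ (+) _); exact: addbC.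
Qed.

Lemma ddn_out d h s t (y : vec d) : d <= t -> ddn h s t y = false.
Proof.
move=> Ht; rewrite /ddn !(flipn_out _ Ht).
have E : forall a b : bool, a (+) b (+) a (+) b = false by case; case.
exact: E.
Qed.

Definition ev n (w : vec n) (p : nat) := \big[addb/false]_(i < n) (w i && (i == p :> nat)).

Lemma dotv_flip n (w x : vec n) p : dotv w (flipn x p) = dotv w x (+) ev w p.
Proof.
rewrite /dotv /ev -big_split /=; apply: eq_bigr => i _; by rewrite flipnE andbX.
Qed.

Lemma ddn_affine n (w : vec n) c p q x : ddn (fun x => dotv w x (+) c) p q x = false.
Proof.
rewrite /ddn /= !dotv_flip.
by case: (dotv w x); case: (ev w p); case: (ev w q); case: c.
Qed.

Lemma sum_pair n (P : pred (vec n)) (h : vec n -> bool) (p : 'I_n) :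
  (forall x, P (flipn x p) = P x) ->
  \big[addb/false]_(x | P x) h x =
  \big[addb/false]_(x | P x && ~~ x p) (h x (+) h (flipn x p)).
Proof.
move=> HP; rewrite (bigID (fun x : vec n => x p)) /= big_split /= addbC; congr (_ (+) _).
have hi : injective (fun x : {ffun 'I_n -> bool} => flipn x p) by move=> x y E; rewrite -(flipnK x p) -(flipnK y p) /= E.
rewrite (reindex_inj hi) /=.
by apply: eq_bigl => x; rewrite HP flipnE eqxx addbT.
Qed.

Lemma subvec_flip d (u x : vec d) (j : 'I_d) : u j -> subvec (flipn x j) u = subvec x u.
Proof.
move=> uj; apply: eq_forallb => i; rewrite flipnE.
case: (eqVneq i j) => [->|ne]; first by rewrite uj !implybT.
have -> : (nat_of_ord i == j) = false by apply/negbTE.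
by rewrite addbF.
Qed.

Lemma anf_dd d (h : vec d -> bool) (u : vec d) (j k : 'I_d) :
  u j -> u k -> j != k -> anf_coef h u -> exists y, ddn h j k y.
Proof.
move=> uj uk jk.
case: (boolP [exists y, ddn h j k y]) => [/existsP//|].
rewrite negb_exists => /forallP Hn.
rewrite /anf_coef (@sum_pair _ _ _ j); last by move=> x; apply: subvec_flip.
rewrite (@sum_pair _ (fun x => subvec x u && ~~ x j) _ k) /=; last first.
  move=> x; rewrite subvec_flip // flipnE.
  have -> : (nat_of_ord j == k) = false by apply/negbTE.
  by rewrite addbF.
rewrite big1 // => x _.
have := Hn x; rewrite /ddn (flipnC _ k j) -!addbA => /negbTE <-.
by [].
Qed.

Lemma deg2_dd d (h : vec d -> bool) :
  2 <= alg_degree h -> exists (j k : 'I_d) y, (j < k) && ddn h j k y.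
Proof.
rewrite /alg_degree => H.
case: (boolP [exists u, anf_coef h u && (1 < hweight u)]); last first.
  rewrite negb_exists => /forallP Hn.
  have : \max_(u | anf_coef h u) hweight u <= 1.
    apply/bigmax_leqP => u Hu; move: (Hn u); by rewrite Hu /= -leqNgt.
  by rewrite leqNgt H.
move=> /existsP [u /andP [Hu Hw]].
move: Hw; rewrite /hweight => /card_gt1P [j [k [Hj Hk jk]]].
have [y Hy] := anf_dd Hj Hk jk Hu.
case: (ltngtP j k) => [lt|gt|eq].
- by exists j, k, y; rewrite lt Hy.
- by exists k, j, y; rewrite gt ddnC Hy.
- by move: jk; rewrite -val_eqE /= eq eqxx.
Qed.

Lemma coord_in n (x : vec n) (i : 'I_n) : coord x i = x i.
Proof. by rewrite /coord valK. Qed.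

Definition win b (x : vec (b + b)) (i : nat) : vec b.+1 :=
  [ffun j : 'I_b.+1 => coord x (i + j)].

Lemma coord_flip n (x : vec n) p t : p < n -> coord (flipn x p) t = coord x t (+) (t == p).
Proof.
move=> Hp; rewrite /coord; case: insubP => [i _ <-|]; first by rewrite flipnE.
rewrite -leqNgt => Ht; suff -> : (t == p) = false by rewrite addbF.
by apply/negbTE; rewrite neq_ltn (leq_trans Hp Ht) orbT.
Qed.

Lemma win_flip b (x : vec (b + b)) p i :
  i <= p -> p < b + b -> win (flipn x p) i = flipn (win x i) (p - i).
Proof.
move=> Hi Hp; apply/ffunP => j; rewrite flipnE !ffunE coord_flip //.
congr (_ (+) _); by apply/idP/idP => /eqP E; apply/eqP; lia.
Qed.

Lemma ddn_win b (f : vec b.+1 -> bool) (x : vec (b + b)) p q i :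
  i <= p -> i <= q -> p < b + b -> q < b + b ->
  ddn (fun z => f (win z i)) p q x = ddn f (p - i) (q - i) (win x i).
Proof.
move=> ip iq pn qn; by rewrite /ddn !win_flip.
Qed.

Lemma ddn_sum b (a : 'I_b -> bool) (f : vec b.+1 -> bool) p q (x : vec (b + b)) :
  ddn (fun z => \big[addb/false]_(i < b) (a i && f (win z i))) p q x =
  \big[addb/false]_(i < b) (a i && ddn (fun z => f (win z i)) p q x).
Proof.
rewrite /ddn -!big_split; apply: eq_bigr => i _; by rewrite !andbX.
Qed.

Lemma core b (f : vec b.+1 -> bool) (a : 'I_b -> bool) :
  (exists i, a i) -> 2 <= alg_degree f ->
  ~ exists (w : vec (b + b)) (c : bool), forall x,
     \big[addb/false]_(i < b) (a i && f (win x i)) = dotv w x (+) c.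
Proof.
move=> exa Hdeg [w [c Hwc]].
pose Pm := fun i : nat => [exists i' : 'I_b, (i' == i :> nat) && a i'].
have exP : exists i, Pm i.
  by case: exa => i ai; exists i; apply/existsP; exists i; rewrite eqxx ai.
have ubP : forall i, Pm i -> i <= b.
  by move=> i /existsP [i' /andP [/eqP <- _]]; apply: ltnW.
case: (ex_maxnP exP ubP) => m /existsP [m' /andP [/eqP Em am]] maxm.
have maxa : forall i : 'I_b, a i -> i <= m.
  by move=> i ai; apply: maxm; apply/existsP; exists i; rewrite eqxx ai.
pose PK := fun k : nat => [exists j : 'I_b.+1, exists k' : 'I_b.+1, exists y,
   [&& (k' == k :> nat), j < k' & ddn f j k' y]].
have exK : exists k, PK k.
  have [j [k [y /andP [jk Hy]]]] := deg2_dd Hdeg.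
  by exists k; apply/existsP; exists j; apply/existsP; exists k; apply/existsP; exists y;
     rewrite eqxx jk Hy.
have ubK : forall k, PK k -> k <= b.+1.
  move=> k /existsP [j /existsP [k' /existsP [y /and3P [/eqP <- _ _]]]].
  exact: ltnW.
case: (ex_maxnP exK ubK) => K /existsP [J /existsP [K' /existsP [y /and3P [/eqP EK JK Hy]]]] maxK.
have maxK' : forall (j k : nat) z, j < k -> k < b.+1 -> K < k -> ddn f j k z = false.
  move=> j k z jk kb Kk; apply/negbTE/negP => Hz.
  have : PK k.
    apply/existsP; exists (Ordinal (ltn_trans jk kb)); apply/existsP; exists (Ordinal kb).
    by apply/existsP; exists z; rewrite /= eqxx jk Hz.
  by move/maxK; rewrite leqNgt Kk.
have mb : m < b by rewrite -Em.
have Kb : K <= b by rewrite -EK -ltnS.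
pose x : vec (b + b) := [ffun t : 'I_(b + b) => coord y (t - m)].
have winm : win x m = y.
  apply/ffunP => j; rewrite !ffunE.
  have Hmj : m + j < b + b by move: (ltn_ord j); lia.
  have -> : m + j = Ordinal Hmj by [].
  by rewrite coord_in ffunE /= addKn -(coord_in y j).
pose p := J + m; pose q := K + m.
have pn : p < b + b by rewrite /p; move: (ltn_ord J) JK; rewrite EK; lia.
have qn : q < b + b by rewrite /q; lia.
have : ddn (fun z => \big[addb/false]_(i < b) (a i && f (win z i))) p q x = false.
  by rewrite /ddn !Hwc; apply: ddn_affine.
rewrite ddn_sum (bigD1 m') //= big1.
  rewrite am ddn_win ?Em /p /q; try lia.
  by rewrite !addnK winm -EK Hy.
move=> i ne; case ai: (a i) => //=.
have im : i < m.
  rewrite ltn_neqAle maxa // andbT -Em; by rewrite (inj_eq val_inj).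
rewrite ddn_win; try lia.
case: (ltnP (q - i) b.+1) => qi; last by apply: ddn_out.
apply: maxK' => //; rewrite /p /q; move: JK; rewrite EK; lia.
Qed.

Lemma concat_l b (y z : vec b) i : concat y z (lshift b i) = y i.
Proof. by rewrite ffunE (unsplitK (inl i : 'I_b + 'I_b)). Qed.
Lemma concat_r b (y z : vec b) i : concat y z (rshift b i) = z i.
Proof. by rewrite ffunE (unsplitK (inr i : 'I_b + 'I_b)). Qed.

Lemma dotv_sbox b (f g : vec b.+1 -> bool) (v x : vec (b + b)) :
  dotv v (sbox f g x) =
  \big[addb/false]_(i < b) (v (lshift b i) && f (win x i)) (+)
  \big[addb/false]_(i < b) (v (rshift b i) && g (win x i)).
Proof.
rewrite /dotv big_split_ord /sbox; congr (_ (+) _); apply: eq_bigr => i _.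
  by rewrite concat_l ffunE.
by rewrite concat_r ffunE.
Qed.

Lemma nl0 n (h : vec n -> bool) : nl h = 0 -> exists w c, forall x, h x = dotv w x (+) c.
Proof.
move=> H.
case: (boolP [exists w, exists c, hdist h (fun x => dotv w x (+) c) == 0]).
  move=> /existsP [w /existsP [c /eqP Hd]]; exists w, c => x.
  have := card0_eq Hd x; rewrite !inE => /negbFE /eqP //.
rewrite negb_exists => /forallP Hn.
suff : 0 < nl h by rewrite H.
rewrite /nl; apply: (big_ind (fun k => 0 < k)); first by rewrite expn_gt0.
  by move=> u1 u2 H1 H2; rewrite leq_min H1 H2.
move=> w _; apply: (big_ind (fun k => 0 < k)); first by rewrite expn_gt0.
  by move=> u1 u2 H1 H2; rewrite leq_min H1 H2.
move=> c _; have := Hn w; rewrite negb_exists => /forallP /(_ c).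
by rewrite lt0n.
Qed.

Theorem lemma2 (b : nat) (f g : vec b.+1 -> bool) (v : vec (b + b)) :
  1 <= b ->
  bipermutive f -> bipermutive g ->
  2 <= alg_degree f -> 2 <= alg_degree g ->
  orthogonal_CA f g ->
  v != [ffun => false] ->
  nl (fun x => dotv v (sbox f g x)) = 0 ->
  (exists i : 'I_b, v (lshift b i)) /\ (exists i : 'I_b, v (rshift b i)).
Proof.
move=> _ _ _ degf degg _ vn0 /nl0 [w [c Hwc]].
have [t vt] : exists t, v t.
  case: (boolP [exists t, v t]) => [/existsP//|].
  rewrite negb_exists => /forallP Hn; move: vn0; case/eqP; apply/ffunP => t.
  by rewrite ffunE; apply/negbTE.
case: (boolP [exists i, v (lshift b i)]) => [/existsP HL|].
  case: (boolP [exists i, v (rshift b i)]) => [/existsP HR|]; first by [].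
  rewrite negb_exists => /forallP HR; exfalso.
  apply: (@core b f (fun i => v (lshift b i))) => //.
  exists w, c => x; rewrite -Hwc dotv_sbox [X in _ = _ (+) X]big1 ?addbF //.
  by move=> i _; rewrite (negbTE (HR i)).
rewrite negb_exists => /forallP HL; exfalso.
apply: (@core b g (fun i => v (rshift b i))) => //.
  move: vt; case: (splitP t) => [j Ej|k Ek] vt.
    have E : t = lshift b j by apply: val_inj.
    by move: (HL j); rewrite -E vt.
  have E : t = rshift b k by apply: val_inj.
  by exists k; rewrite -E.
exists w, c => x; rewrite -Hwc dotv_sbox [X in _ = X (+) _]big1 ?addFb //.
by move=> i _; rewrite (negbTE (HL i)).
Qed.
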